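(* Let $k$ be a field and let $A$ and $B$ be connected graded $k$-algebras that are finitely generated in degree $1$. If $A\cong B$ as ungraded $k$-algebras, then $A\cong B$ as graded $k$-algebras.
   Context: All algebras are associative unital $k$-algebras. A graded algebra $A=\bigoplus_{i\ge 0}A_i$ is connected graded if $A_0=k$; it is finitely generated in degree $1$ if $\dim_k A_1<\infty$ and $A$ is generated as an algebra by $A_1$. *)

(* Defs.v *)
From HB Require Import structures.
From mathcomp Require Import all_boot all_order all_algebra.
Set Implicit Arguments. Unset Strict Implicit. Unset Printing Implicit Defensive.
Import GRing.Theory.
Local Open Scope ring_scope.

Inductive gen_by (k : fieldType) (A : algType k) (S : A -> Prop) : A -> Prop :=
  | gen_in  : forall a, S a -> gen_by S a
  | gen_one : gen_by S 1
  | gen_add : forall a b, gen_by S a -> gen_by S b -> gen_by S (a + b)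
  | gen_scale : forall (c : k) a, gen_by S a -> gen_by S (c *: a)
  | gen_mul : forall a b, gen_by S a -> gen_by S b -> gen_by S (a * b).

(* deg i a  means  a \in A_i.  A grading A = \bigoplus_{i >= 0} A_i. *)
Definition is_grading (k : fieldType) (A : algType k) (deg : nat -> A -> Prop) :=
  [/\
      (forall i, deg i 0),
      (forall i (c : k) a b, deg i a -> deg i b -> deg i (c *: a + b)),
      (forall a : A, exists n (s : 'I_n -> A),
          (forall i : 'I_n, deg i (s i)) /\ a = \sum_(i < n) s i),
      (forall n (s : 'I_n -> A), (forall i : 'I_n, deg i (s i)) ->
          \sum_(i < n) s i = 0 -> forall i, s i = 0)
    &
      (forall i j a b, deg i a -> deg j b -> deg (i + j)%N (a * b))].

Definition cgraded_fg1 (k : fieldType) (A : algType k) (deg : nat -> A -> Prop) :=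
  [/\ is_grading deg,
      (forall a : A, deg 0%N a <-> exists c : k, a = c%:A),
      (exists g : seq A, (forall x, x \in g -> deg 1%N x) /\
         forall a, deg 1%N a -> exists c : 'I_(size g) -> k,
            a = \sum_(i < size g) c i *: g`_i)
    &
      (forall a : A, gen_by (deg 1%N) a)].

Definition alg_iso (k : fieldType) (A B : algType k) (f : A -> B) :=
  [/\ (forall (c : k) x y, f (c *: x + y) = c *: f x + f y),
      (forall x y, f (x * y) = f x * f y),
      f 1 = 1
    & bijective f].

Definition graded_alg_iso (k : fieldType) (A B : algType k)
    (degA : nat -> A -> Prop) (degB : nat -> B -> Prop) (f : A -> B) :=
  alg_iso f /\ (forall i a, degA i a <-> degB i (f a)).

(* Main.v *)
Require Import Defs.
From HB Require Import structures.
From mathcomp Require Import all_boot all_order all_algebra.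
From Stdlib Require Import ClassicalEpsilon Classical.
From mathcomp Require Import zify.
Set Implicit Arguments. Unset Strict Implicit. Unset Printing Implicit Defensive.
Import GRing.Theory.
Local Open Scope ring_scope.



Lemma sum_ext0 (V : nmodType) (s : nat -> V) N K :
  (forall i, (N <= i)%N -> s i = 0) -> (N <= K)%N ->
  \sum_(i < K) s i = \sum_(i < N) s i.
Proof.
move=> H NK; rewrite -!(big_mkord xpredT) (@big_cat_nat _ _ _ N 0 K _ _ (leq0n N) NK) /=.
rewrite [X in _ + X]big1_seq ?addr0 // => i /andP[_]; rewrite mem_iota.
by case/andP=> Hi _; apply: H.
Qed.

Section Grad.
Variables (k : fieldType) (A : algType k) (deg : nat -> A -> Prop).
Hypothesis hg : is_grading deg.

Definition decomp (a : A) (s : nat -> A) N :=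
  [/\ forall i, deg i (s i), forall i, (N <= i)%N -> s i = 0 & a = \sum_(i < N) s i].

Lemma deg0 i : deg i 0. Proof. by case: hg. Qed.
Lemma degL i c a b : deg i a -> deg i b -> deg i (c *: a + b).
Proof. by case: hg => _ H _ _ _; apply: H. Qed.
Lemma degD i a b : deg i a -> deg i b -> deg i (a + b).
Proof. by move=> ha hb; have := degL 1 ha hb; rewrite scale1r. Qed.
Lemma degZ i c a : deg i a -> deg i (c *: a).
Proof. by move=> ha; have := degL c ha (deg0 i); rewrite addr0. Qed.
Lemma degN i a : deg i a -> deg i (- a).
Proof. by move=> ha; rewrite -scaleN1r; apply: degZ. Qed.
Lemma degB i a b : deg i a -> deg i b -> deg i (a - b).
Proof. by move=> ha hb; apply: degD => //; apply: degN. Qed.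
Lemma degM i j a b : deg i a -> deg j b -> deg (i + j)%N (a * b).
Proof. by case: hg => _ _ _ _ H; apply: H. Qed.

Lemma decomp_ex a : exists s N, decomp a s N.
Proof.
case: hg => _ _ H _ _; case: (H a) => n [s [hs ->]].
exists (fun j => if insub j is Some i then s i else 0), n; split.
- move=> j; case: insubP => [i _ <-|_]; [exact: hs| exact: deg0].
- move=> j hj; case: insubP => [i hi _|//]; by rewrite ltnNge hj in hi.
- by apply: eq_bigr => i _; rewrite valK.
Qed.

Lemma decomp_uniq a s N t M : decomp a s N -> decomp a t M -> forall i, s i = t i.
Proof.
case=> hs sN ea [ht tM eb] i.
have e0 : \sum_(j < maxn N M) (s j - t j) = 0.
  rewrite sumrB (sum_ext0 sN (leq_maxl N M)) (sum_ext0 tM (leq_maxr N M)).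
  by rewrite -ea -eb subrr.
case: (ltnP i (maxn N M)) => hi.
- case: hg => _ _ _ H _.
  have := H _ (fun j : 'I_(maxn N M) => s j - t j) (fun j => degB (hs j) (ht j)) e0 (Ordinal hi).
  by move/eqP; rewrite subr_eq0 => /eqP.
- by rewrite sN ?tM // (leq_trans _ hi) // ?leq_maxl ?leq_maxr.
Qed.

Definition cmp (a : A) : nat -> A :=
  proj1_sig (constructive_indefinite_description _ (decomp_ex a)).

Lemma comp_decomp a : exists N, decomp a (cmp a) N.
Proof. rewrite /cmp; case: constructive_indefinite_description => s /= //. Qed.

Lemma compP a s N : decomp a s N -> forall i, cmp a i = s i.
Proof. by move=> h i; case: (comp_decomp a) => M hM; apply: decomp_uniq hM h i. Qed.

Lemma comp_deg a i : deg i (cmp a i).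
Proof. by case: (comp_decomp a) => N []. Qed.

Lemma comp_hom d x : deg d x -> forall i, cmp x i = if i == d then x else 0.
Proof.
move=> hx; apply: compP (d.+1) _; split.
- by move=> i; case: eqP => [->|]; [|move=> _; exact: deg0].
- by move=> i hi; case: eqP => // ei; rewrite ei ltnn in hi.
- rewrite (bigD1 (Ordinal (ltnSn d))) //= eqxx big1 ?addr0 // => j.
  by rewrite -val_eqE /= => /negPf ->.
Qed.

Lemma compL c a b i : cmp (c *: a + b) i = c *: cmp a i + cmp b i.
Proof.
case: (comp_decomp a) => N [h1 h2 h3]; case: (comp_decomp b) => M [g1 g2 g3].
suff D : decomp (c *: a + b) (fun j => c *: cmp a j + cmp b j) (maxn N M) by exact: compP D i.
split.
- by move=> j; apply: degL.
- move=> j hj; rewrite h2 ?g2 ?scaler0 ?addr0 //; apply: leq_trans hj;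
  by rewrite ?leq_maxl ?leq_maxr.
- rewrite big_split /= -scaler_sumr (sum_ext0 h2 (leq_maxl N M)).
  by rewrite (sum_ext0 g2 (leq_maxr N M)) -h3 -g3.
Qed.

Lemma comp0 i : cmp 0 i = 0.
Proof. rewrite (comp_hom (deg0 0%N) i). by case: (i == 0%N). Qed.
Lemma compD a b i : cmp (a + b) i = cmp a i + cmp b i.
Proof. by have := compL 1 a b i; rewrite !scale1r. Qed.
Lemma compZ c a i : cmp (c *: a) i = c *: cmp a i.
Proof. by have := compL c a 0 i; rewrite !addr0 comp0 addr0. Qed.
Lemma compN a i : cmp (- a) i = - cmp a i.
Proof. by rewrite -scaleN1r compZ scaleN1r. Qed.
Lemma compB a b i : cmp (a - b) i = cmp a i - cmp b i.
Proof. by rewrite compD compN. Qed.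
Lemma comp_sum n (F : 'I_n -> A) i : cmp (\sum_(j < n) F j) i = \sum_(j < n) cmp (F j) i.
Proof.
elim/big_rec2: _ => [|j x y _ <-]; by rewrite ?comp0 ?compD.
Qed.

Lemma comp_bound a : exists N, forall i, (N <= i)%N -> cmp a i = 0.
Proof. by case: (comp_decomp a) => N [_ h _]; exists N. Qed.

Lemma comp_sumE a N : (forall i, (N <= i)%N -> cmp a i = 0) -> a = \sum_(i < N) cmp a i.
Proof.
move=> hN; case: (comp_decomp a) => M [_ hM e].
by rewrite {1}e -(sum_ext0 hM (leq_maxl M N)) (sum_ext0 hN (leq_maxr M N)).
Qed.

Lemma comp_eq a b : (forall i, cmp a i = cmp b i) -> a = b.
Proof.
move=> h; case: (comp_bound a) => N hN; case: (comp_bound b) => M hM.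
rewrite (comp_sumE hN) (comp_sumE hM).
rewrite -(sum_ext0 hN (leq_maxl N M)) -(sum_ext0 hM (leq_maxr N M)).
by apply: eq_bigr => i _; rewrite h.
Qed.

Lemma comp_mul0 a b e :
  (forall i j, (i + j)%N = e -> cmp a i * cmp b j = 0) -> cmp (a * b) e = 0.
Proof.
move=> H; case: (comp_bound a) => N hN; case: (comp_bound b) => M hM.
rewrite (comp_sumE hN) (comp_sumE hM) mulr_suml comp_sum big1 // => i _.
rewrite mulr_sumr comp_sum big1 // => j _.
rewrite (comp_hom (degM (comp_deg a i) (comp_deg b j))).
by case: eqP => // he; apply: H; rewrite he.
Qed.


Definition Lo n a := forall j, (n <= j)%N -> cmp a j = 0.
Definition Hi n a := forall j, (j < n)%N -> cmp a j = 0.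

Lemma Lo0 n : Lo n 0. Proof. by move=> j _; rewrite comp0. Qed.
Lemma Hi0 n : Hi n 0. Proof. by move=> j _; rewrite comp0. Qed.
Lemma LoL n c a b : Lo n a -> Lo n b -> Lo n (c *: a + b).
Proof. by move=> ha hb j hj; rewrite compL ha ?hb ?scaler0 ?addr0. Qed.
Lemma HiL n c a b : Hi n a -> Hi n b -> Hi n (c *: a + b).
Proof. by move=> ha hb j hj; rewrite compL ha ?hb ?scaler0 ?addr0. Qed.
Lemma LoD n a b : Lo n a -> Lo n b -> Lo n (a + b).
Proof. by move=> ha hb; have := LoL 1 ha hb; rewrite scale1r. Qed.
Lemma HiD n a b : Hi n a -> Hi n b -> Hi n (a + b).
Proof. by move=> ha hb; have := HiL 1 ha hb; rewrite scale1r. Qed.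
Lemma LoZ n c a : Lo n a -> Lo n (c *: a).
Proof. by move=> ha; have := LoL c ha (@Lo0 n); rewrite addr0. Qed.
Lemma HiZ n c a : Hi n a -> Hi n (c *: a).
Proof. by move=> ha; have := HiL c ha (@Hi0 n); rewrite addr0. Qed.
Lemma LoN n a : Lo n a -> Lo n (- a).
Proof. by move=> ha; rewrite -scaleN1r; apply: LoZ. Qed.
Lemma HiN n a : Hi n a -> Hi n (- a).
Proof. by move=> ha; rewrite -scaleN1r; apply: HiZ. Qed.
Lemma LoB n a b : Lo n a -> Lo n b -> Lo n (a - b).
Proof. by move=> ha hb; apply: LoD => //; apply: LoN. Qed.
Lemma HiB n a b : Hi n a -> Hi n b -> Hi n (a - b).
Proof. by move=> ha hb; apply: HiD => //; apply: HiN. Qed.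
Lemma Lo_mono n m a : (n <= m)%N -> Lo n a -> Lo m a.
Proof. by move=> nm h j hj; apply: h; apply: leq_trans hj. Qed.
Lemma Hi_mono n m a : (m <= n)%N -> Hi n a -> Hi m a.
Proof. by move=> nm h j hj; apply: h; apply: leq_trans nm. Qed.
Lemma deg_Lo d x : deg d x -> Lo d.+1 x.
Proof. by move=> hx j hj; rewrite (comp_hom hx); case: eqP => // e; rewrite e ltnn in hj. Qed.
Lemma deg_Hi d x : deg d x -> Hi d x.
Proof. by move=> hx j hj; rewrite (comp_hom hx); case: eqP => // e; rewrite e ltnn in hj. Qed.
Lemma Lo_mul n m a b : Lo n a -> Lo m.+1 b -> Lo (n + m) (a * b).
Proof.
move=> ha hb e he; apply: comp_mul0 => i j ij.
case: (leqP n i) => hi; first by rewrite ha ?mul0r.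
rewrite hb ?mulr0 //; lia.
Qed.
Lemma Hi_mul n m a b : Hi n a -> Hi m b -> Hi (n + m) (a * b).
Proof.
move=> ha hb e he; apply: comp_mul0 => i j ij.
case: (ltnP i n) => hi; first by rewrite ha ?mul0r.
rewrite hb ?mulr0 //; lia.
Qed.

Definition Lopart n a := \sum_(j < n) cmp a j.
Lemma comp_Lopart n a i : cmp (Lopart n a) i = if (i < n)%N then cmp a i else 0.
Proof.
rewrite /Lopart comp_sum.
case: ifP => hi.
- rewrite (bigD1 (Ordinal hi)) //= (comp_hom (comp_deg a i)) eqxx big1 ?addr0 // => j.
  rewrite -val_eqE /= (comp_hom (comp_deg a j)) eq_sym => /negPf -> //.
- rewrite big1 // => j _; rewrite (comp_hom (comp_deg a j)); case: eqP => // e.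
  by move: (ltn_ord j); rewrite -e hi.
Qed.
Lemma Lopart_Lo n a : Lo n (Lopart n a).
Proof. by move=> j hj; rewrite comp_Lopart ltnNge hj. Qed.
Lemma Lopart_Hi n a : Hi n (a - Lopart n a).
Proof. by move=> j hj; rewrite compB comp_Lopart hj subrr. Qed.
Lemma Lopart_id n a : Lo n a -> Lopart n a = a.
Proof.
move=> h; apply: comp_eq => i; rewrite comp_Lopart; case: ltnP => // hi.
by rewrite h.
Qed.
Lemma LopartL n c a b : Lopart n (c *: a + b) = c *: Lopart n a + Lopart n b.
Proof. by rewrite /Lopart scaler_sumr -big_split; apply: eq_bigr => i _; rewrite compL. Qed.
Lemma Lopart0_Hi n a : Lopart n a = 0 -> Hi n a.
Proof. by move=> h j hj; have := comp_Lopart n a j; rewrite h comp0 hj. Qed.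
Lemma Hi_Lopart0 n a : Hi n a -> Lopart n a = 0.
Proof. by move=> h; rewrite /Lopart big1 // => j _; apply: h. Qed.
Lemma Lo_Hi0 n a : Lo n a -> Hi n a -> a = 0.
Proof. by move=> hl hh; rewrite -(Lopart_id hl) Hi_Lopart0. Qed.

End Grad.



Inductive Spn (k : fieldType) (V : lmodType k) (S : V -> Prop) : V -> Prop :=
  | Sin a : S a -> Spn S a
  | S0 : Spn S 0
  | SL (c : k) a b : Spn S a -> Spn S b -> Spn S (c *: a + b).

Section Two.
Variables (k : fieldType) (A B : algType k) (degA : nat -> A -> Prop) (degB : nat -> B -> Prop).
Hypotheses (hA : is_grading degA) (hB : is_grading degB).
Hypothesis genA : forall a : A, gen_by (degA 1%N) a.
Hypothesis connB : forall b : B, degB 0%N b <-> exists c : k, b = c%:A.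
Variable f : A -> B.
Hypotheses (fL : forall (c : k) x y, f (c *: x + y) = c *: f x + f y)
  (fM : forall x y, f (x * y) = f x * f y) (f1 : f 1 = 1).

Lemma f0 : f 0 = 0.
Proof. have h := fL 1 0 0; rewrite !scale1r !addr0 in h. by apply: (@addIr _ (f 0)); rewrite add0r -h. Qed.
Lemma fD x y : f (x + y) = f x + f y.
Proof. by have := fL 1 x y; rewrite !scale1r. Qed.
Lemma fZ c x : f (c *: x) = c *: f x.
Proof. by have := fL c x 0; rewrite !addr0 f0 addr0. Qed.
Lemma fN x : f (- x) = - f x.
Proof. by rewrite -scaleN1r fZ scaleN1r. Qed.
Lemma fB x y : f (x - y) = f x - f y.
Proof. by rewrite fD fN. Qed.

Definition M n a := Hi hB n (f a).
Definition Z a := exists t, Lo hA t.+1 a /\ M t a.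

Lemma Z_mul a b : Z a -> Z b -> Z (a * b).
Proof.
case=> t [l1 m1] [s [l2 m2]]; exists (t + s)%N; split.
- by have := Lo_mul l1 l2; rewrite addSn.
- by rewrite /M fM; apply: Hi_mul.
Qed.

Lemma Spn_mulr (S : A -> Prop) a b : (forall x y, S x -> S y -> S (x * y)) -> S a -> Spn S b -> Spn S (a * b).
Proof.
move=> HS ha; elim => [x hx|| c x y _ ihx _ ihy].
- by apply: Sin; apply: HS.
- by rewrite mulr0; apply: S0.
- by rewrite mulrDr -scalerAr; apply: SL.
Qed.

Lemma Spn_mul (S : A -> Prop) a b : (forall x y, S x -> S y -> S (x * y)) -> Spn S a -> Spn S b -> Spn S (a * b).
Proof.
move=> HS; elim => [x hx|| c x y _ ihx _ ihy] hb.
- by apply: Spn_mulr.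
- by rewrite mul0r; apply: S0.
- by rewrite mulrDl -scalerAl; apply: SL; [apply: ihx|apply: ihy].
Qed.

Lemma SpnD (V : lmodType k) (S : V -> Prop) a b : Spn S a -> Spn S b -> Spn S (a + b).
Proof. by move=> ha hb; have := SL 1 ha hb; rewrite scale1r. Qed.

Lemma Spn_ind' (V : lmodType k) (S T : V -> Prop) : T 0 -> (forall c a b, T a -> T b -> T (c *: a + b)) ->
  (forall a, S a -> T a) -> forall a, Spn S a -> T a.
Proof. by move=> h0 hL hS a; elim => //; auto. Qed.

Lemma one_degA : degA 0%N 1 -> True. Proof. by []. Qed.

Lemma all_SpnZ (hB1 : degB 0%N 1) (hA1 : degA 0%N 1) a : Spn Z a.
Proof.
have Z1 : Z 1 by exists 0%N; split; [apply: deg_Lo|move=> j]. 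
elim: (genA a) => [x hx|| x y _ hx _ hy | c x _ hx | x y _ hx _ hy].
- have hc := comp_deg hB (f x) 0.
  case/connB: hc => c ec.
  have -> : x = (x - c%:A) + c *: 1 by rewrite subrK.
  apply: SpnD; apply: Sin.
  + exists 1%N; split.
    * apply: LoB; first by apply: (Lo_mono (n := 2)); [|apply: deg_Lo].
      by apply: (Lo_mono (n := 1)) => //; apply: deg_Lo; apply: (degZ hA); apply: hA1.
    * move=> j; rewrite ltnS leqn0 => /eqP ->.
      rewrite fB fZ f1 (compB hB) ec (comp_hom hB (degZ hB c hB1)) /= subrr //.
  + exists 0%N; split; first by apply: deg_Lo; apply: (degZ hA).
    by move=> j.
- by apply: Sin.
- by apply: SpnD.
- by rewrite -[c *: x]addr0; apply: SL => //; apply: S0.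
- by apply: Spn_mul => //; apply: Z_mul.
Qed.

Lemma factE (hB1 : degB 0%N 1) (hA1 : degA 0%N 1) n a :
  exists l h, a = l + h /\ Lo hA n l /\ M n h.
Proof.
pose T a := exists l h, a = l + h /\ Lo hA n l /\ M n h.
apply: (@Spn_ind' _ Z T); last exact: all_SpnZ.
- exists 0, 0; rewrite addr0; split=> //; split; first exact: Lo0.
  by rewrite /M f0; apply: Hi0.
- move=> c x y [l1 [h1 [-> [L1 M1]]]] [l2 [h2 [-> [L2 M2]]]].
  exists (c *: l1 + l2), (c *: h1 + h2); split; first by rewrite scalerDr; 
    rewrite addrACA.
  split; first exact: LoL.
  by rewrite /M fL; apply: HiL.
- move=> x [t [Lx Mx]]; case: (leqP n t) => nt.
  + exists 0, x; rewrite add0r; split=> //; split; first exact: Lo0.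
    by apply: (Hi_mono nt).
  + exists x, 0; rewrite addr0; split=> //; split; first exact: (Lo_mono nt).
    by rewrite /M f0; apply: Hi0.
Qed.

End Two.



Lemma nat_min (P : nat -> Prop) : (exists n, P n) -> exists n, P n /\ forall m, P m -> (n <= m)%N.
Proof.
case=> n; elim: n {-2}n (leqnn n) => [|N IH] n hn Pn.
- by exists n; split=> // m _; move: hn; rewrite leqn0 => /eqP ->.
- case: (classic (exists m, P m /\ (m < n)%N)) => [[m [Pm mn]]|H].
  + by apply: (IH m) => //; rewrite -ltnS (leq_trans mn).
  + exists n; split=> // m Pm; rewrite leqNgt; apply/negP => mn; apply: H; exists m; by split.
Qed.

Section LA.
Variables (k : fieldType) (V : lmodType k) (P : V -> Prop) (p : nat) (e : 'I_p -> V).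
Hypothesis hP : forall v, P v <-> exists c : 'I_p -> k, v = \sum_i c i *: e i.

Lemma P0 : P 0.
Proof. by apply/hP; exists (fun _ => 0); rewrite big1 // => i _; rewrite scale0r. Qed.
Lemma PL c a b : P a -> P b -> P (c *: a + b).
Proof.
move=> /hP[x ->] /hP[y ->]; apply/hP; exists (fun i => c * x i + y i).
by rewrite scaler_sumr -big_split; apply: eq_bigr => i _; rewrite scalerDl scalerA.
Qed.
Lemma Psum n (F : 'I_n -> V) : (forall i, P (F i)) -> P (\sum_i F i).
Proof.
move=> H; elim/big_ind: _ => //; first exact: P0.
by move=> x y hx hy; have := PL 1 hx hy; rewrite scale1r.
Qed.
Lemma Pe i : P (e i).
Proof.
apply/hP; exists (fun j => if j == i then 1 else 0).
rewrite (bigD1 i) //= eqxx scale1r big1 ?addr0 // => j /negPf ->; by rewrite scale0r.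
Qed.

Definition spans n (E : 'I_n -> V) := forall v, P v <-> exists c : 'I_n -> k, v = \sum_i c i *: E i.

Lemma min_indep d (E : 'I_d -> V) : spans E -> (forall m (E' : 'I_m -> V), spans E' -> (d <= m)%N) ->
  forall c : 'I_d -> k, \sum_i c i *: E i = 0 -> forall i, c i = 0.
Proof.
move=> sE mE c hc i; apply: NNPP => ci.
revert E sE mE c hc i ci; case: d => [|d] E sE mE c hc i ci; first by move: (ltn_ord i).
pose E' := fun j : 'I_d => E (lift i j).
have PE : forall j, P (E j).
  move=> j; apply/sE; exists (fun l => if l == j then 1 else 0).
  rewrite (bigD1 j) //= eqxx scale1r big1 ?addr0 // => l /negPf ->; by rewrite scale0r.
have sE' : spans E'.
  move=> v; split.
  - case/sE => a ->.
    have ei : E i = \sum_(j < d) (- (c i)^-1 * c (lift i j)) *: E' j.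
      move: hc; rewrite (bigD1_ord i) //= => /eqP; rewrite addrC addr_eq0 => /eqP h.
      rewrite /E'; under eq_bigr do rewrite -scalerA.
      rewrite -scaler_sumr h scalerN scaleNr opprK scalerA mulVf ?scale1r //.
      by apply/eqP.
    exists (fun j => a i * (- (c i)^-1 * c (lift i j)) + a (lift i j)).
    rewrite (bigD1_ord i) //= ei scaler_sumr -big_split /=.
    by apply: eq_bigr => j _; rewrite scalerA scalerDl.
  - case=> a ->; apply: Psum => j; have := PL (a j) (PE (lift i j)) P0; by rewrite addr0.
by have := mE _ _ sE'; rewrite ltnn.
Qed.

Variables (g : V -> V).
Hypotheses (gL : forall c x y, g (c *: x + y) = c *: g x + g y)
  (gP : forall v, P v -> P (g v)) (gS : forall v, P v -> exists u, P u /\ g u = v).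

Lemma g0 : g 0 = 0.
Proof. have h := gL 1 0 0; rewrite !scale1r !addr0 in h. by apply: (@addIr _ (g 0)); rewrite add0r -h. Qed.

Lemma g_sum n (c : 'I_n -> k) (E : 'I_n -> V) : g (\sum_i c i *: E i) = \sum_i c i *: g (E i).
Proof.
elim/big_rec2: _ => [|j x y _ <-]; first exact: g0.
by rewrite gL.
Qed.

Lemma regroup n m (c : 'I_n -> k) (M : 'I_n -> 'I_m -> k) (E : 'I_m -> V) :
  \sum_j c j *: \sum_l M j l *: E l = \sum_l (\sum_j c j * M j l) *: E l.
Proof.
under eq_bigr do rewrite scaler_sumr.
rewrite exchange_big /=; apply: eq_bigr => l _; rewrite scaler_suml.
by apply: eq_bigr => j _; rewrite scalerA.
Qed.

Lemma surj_inj u : P u -> g u = 0 -> u = 0.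
Proof.
have [d [[E sE] mE]] := nat_min (ex_intro (fun n => exists E : 'I_n -> V, spans E) p (ex_intro _ e hP)).
have ind := min_indep sE (fun m E' sE' => mE m (ex_intro _ E' sE')).
have PE : forall j, P (E j).
  move=> j; apply/sE; exists (fun l => if l == j then 1 else 0).
  rewrite (bigD1 j) //= eqxx scale1r big1 ?addr0 // => l /negPf ->; by rewrite scale0r.
have hm : forall i, exists r : 'I_d -> k, g (E i) = \sum_j r j *: E j by move=> i; apply/sE/gP.
have hC : forall i, exists r : 'I_d -> k, E i = g (\sum_j r j *: E j).
  move=> i; case: (gS (PE i)) => w [/sE [r ->] <-]; by exists r.
pose m i := proj1_sig (constructive_indefinite_description _ (hm i)).
pose C i := proj1_sig (constructive_indefinite_description _ (hC i)).
have em : forall i, g (E i) = \sum_j m i j *: E j.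
  by move=> i; rewrite /m; case: constructive_indefinite_description.
have eC : forall i, E i = g (\sum_j C i j *: E j).
  by move=> i; rewrite /C; case: constructive_indefinite_description.
pose Mm := \matrix_(i, j) m i j; pose Cm := \matrix_(i, j) C i j.
have CM : Cm *m Mm = 1%:M.
  apply/matrixP => i l; rewrite !mxE.
  have e1 : E i = \sum_l (\sum_j C i j * m j l) *: E l.
    by rewrite {1}(eC i) g_sum -regroup; apply: eq_bigr => j _; rewrite em.
  have ed : \sum_l ((i == l)%:R) *: E l = E i.
    rewrite (bigD1 i) //= eqxx scale1r big1 ?addr0 // => j /negPf.
    by rewrite eq_sym => ->; rewrite scale0r.
  have h : \sum_l ((\sum_j C i j * m j l) - (i == l)%:R) *: E l = 0.
    by under eq_bigr do rewrite scalerBl; rewrite sumrB ed -e1 subrr.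
  have := ind _ h l => /eqP; rewrite subr_eq0 => /eqP <-.
  by apply: eq_bigr => j _; rewrite !mxE.
have MC := mulmx1C CM.
case/sE => a ea gu.
have aM : (\row_j a j) *m Mm = 0.
  apply/rowP => l; rewrite !mxE.
  move: gu; rewrite ea g_sum; under eq_bigr do rewrite em; rewrite regroup => h.
  transitivity (\sum_j a j * m j l); last exact: (ind (fun l => \sum_j a j * m j l) h l).
  by apply: eq_bigr => j _; rewrite !mxE.
have a0 : \row_j a j = 0 by rewrite -[\row_j a j]mulmx1 -MC mulmxA aM mul0mx.
rewrite ea big1 // => j _; move/rowP: a0 => /(_ j); rewrite !mxE => ->; by rewrite scale0r.
Qed.

End LA.



Lemma Spn_list (k : fieldType) (V : lmodType k) (L : seq V) a :
  Spn (fun x => x \in L) a -> exists c : 'I_(size L) -> k, a = \sum_i c i *: L`_i.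
Proof.
elim => [x hx||c x y _ [cx ->] _ [cy ->]].
- exists (fun i => if (i == index x L :> nat) then 1 else 0).
  have hi : (index x L < size L)%N by rewrite index_mem.
  rewrite (bigD1 (Ordinal hi)) //= eqxx scale1r nth_index // big1 ?addr0 // => j.
  by rewrite -val_eqE /= => /negPf ->; rewrite scale0r.
- by exists (fun _ => 0); rewrite big1 // => i _; rewrite scale0r.
- exists (fun i => c * cx i + cy i); rewrite scaler_sumr -big_split.
  by apply: eq_bigr => i _; rewrite scalerA scalerDl.
Qed.

Section Fin.
Variables (k : fieldType) (A : algType k) (degA : nat -> A -> Prop).
Hypotheses (hA : is_grading degA) (genA : forall a : A, gen_by (degA 1%N) a).
Hypothesis hA1 : degA 0%N 1.
Variable g : seq A.
Hypotheses (hg1 : forall x, x \in g -> degA 1%N x)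
  (hgsp : forall a, degA 1%N a -> exists c : 'I_(size g) -> k, a = \sum_(i < size g) c i *: g`_i).

Fixpoint mon t : seq A := if t is t'.+1 then [seq x * w | x <- g, w <- mon t'] else [:: 1].

Lemma mon_deg t x : x \in mon t -> degA t x.
Proof.
elim: t x => [|t IH] x /=; first by rewrite inE => /eqP ->.
by case/allpairsP => [[y w] /= [hy hw ->]]; rewrite -add1n; apply: (degM hA); auto.
Qed.

Lemma mon_mul t s x y : x \in mon t -> y \in mon s -> x * y \in mon (t + s).
Proof.
elim: t x => [|t IH] x /=; first by rewrite inE => /eqP ->; rewrite mul1r.
case/allpairsP => [[z w] /= [hz hw ->]] hy; rewrite -mulrA.
by apply/allpairsP; exists (z, w * y); split=> //; apply: IH.
Qed.

Definition MonS x := exists t, x \in mon t.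

Lemma Spn_smul (S : A -> Prop) a b : (forall x y, S x -> S y -> S (x * y)) -> Spn S a -> Spn S b -> Spn S (a * b).
Proof.
move=> HS; elim => [x hx|| c x y _ ihx _ ihy] hb.
- elim: hb => [z hz||c' z w _ ihz _ ihw].
  + by apply: Sin; apply: HS.
  + by rewrite mulr0; apply: S0.
  + by rewrite mulrDr -scalerAr; apply: SL.
- by rewrite mul0r; apply: S0.
- by rewrite mulrDl -scalerAl; apply: SL; [apply: ihx|apply: ihy].
Qed.

Lemma SpnD' (S : A -> Prop) a b : Spn S a -> Spn S b -> Spn S (a + b).
Proof. by move=> ha hb; have := SL 1 ha hb; rewrite scale1r. Qed.

Lemma Spn_sum (S : A -> Prop) n (F : 'I_n -> A) : (forall i, Spn S (F i)) -> Spn S (\sum_i F i).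
Proof. by move=> H; elim/big_ind: _ => //; [apply: S0|move=> x y; apply: SpnD']. Qed.

Lemma all_mon a : Spn MonS a.
Proof.
elim: (genA a) => [x hx|| x y _ hx _ hy | c x _ hx | x y _ hx _ hy].
- case: (hgsp hx) => c ->; apply: Spn_sum => i.
  rewrite -[_ *: _]addr0; apply: SL; last exact: S0.
  apply: Sin; exists 1%N; rewrite -[g`_i]mulr1; apply/allpairsP.
  by exists (g`_i, 1); split=> //=; [apply: mem_nth|rewrite inE].
- by apply: Sin; exists 0%N; rewrite inE.
- by apply: SpnD'.
- by rewrite -[c *: x]addr0; apply: SL => //; apply: S0.
- by apply: Spn_smul => // u v [t hu] [s hv]; exists (t + s)%N; apply: mon_mul.
Qed.

Lemma comp_mon a j : Spn (fun x => x \in mon j) (cmp hA a j).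
Proof.
elim: (all_mon a) => [x [t hx]||c x y _ hx _ hy].
- rewrite (comp_hom hA (mon_deg hx)); case: eqP => [->|_]; [by apply: Sin| exact: S0].
- by rewrite comp0; apply: S0.
- by rewrite compL; apply: SL.
Qed.

Definition Lst n := flatten [seq mon t | t <- iota 0 n].

Lemma Lst_mem n x : x \in Lst n <-> exists2 t, (t < n)%N & x \in mon t.
Proof.
rewrite /Lst; split.
- by case/flatten_mapP => t; rewrite mem_iota add0n => /andP[_ h] hx; exists t.
- by case=> t ht hx; apply/flatten_mapP; exists t => //; rewrite mem_iota add0n.
Qed.

Lemma Spn_mono (S T : A -> Prop) a : (forall x, S x -> T x) -> Spn S a -> Spn T a.
Proof. by move=> H; elim => [x /H|| c x y _ hx _ hy]; [apply: Sin|apply: S0|apply: SL]. Qed.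

Lemma Lo_span n a : Lo hA n a <-> exists c : 'I_(size (Lst n)) -> k, a = \sum_i c i *: (Lst n)`_i.
Proof.
split.
- move=> ha; apply: Spn_list; rewrite (comp_sumE (a := a) ha); apply: Spn_sum => i.
  apply: (Spn_mono _ (comp_mon a i)) => x hx; apply/Lst_mem; by exists i.
- case=> c ->; elim/big_ind: _ => //; first exact: Lo0.
  + by move=> x y; apply: LoD.
  + move=> i _; apply: LoZ; have /Lst_mem [t ht hx] := mem_nth 0 (ltn_ord i).
    by apply: (Lo_mono ht); apply: deg_Lo; apply: mon_deg.
Qed.

End Fin.



Lemma Lo_mul' (k : fieldType) (A : algType k) deg (hg : is_grading deg) n m (a b : A) :
  Lo hg n.+1 a -> Lo hg m b -> Lo hg (n + m) (a * b).
Proof.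
move=> ha hb e he; apply: comp_mul0 => i j ij.
case: (leqP m j) => hj; first by rewrite hb ?mulr0.
rewrite ha ?mul0r //; lia.
Qed.

Lemma cmp_lead (k : fieldType) (A : algType k) deg (hg : is_grading deg) n m (u v : A) :
  Hi hg n u -> Hi hg m v -> cmp hg (u * v) (n + m) = cmp hg u n * cmp hg v m.
Proof.
move=> hu hv.
have h1 : Hi hg n.+1 (u - cmp hg u n).
  move=> j hj; rewrite compB (comp_hom hg (comp_deg hg u n)).
  case: eqP => [->|ne]; first by rewrite subrr.
  by rewrite hu ?subr0 //; lia.
have h2 : Hi hg m.+1 (v - cmp hg v m).
  move=> j hj; rewrite compB (comp_hom hg (comp_deg hg v m)).
  case: eqP => [->|ne]; first by rewrite subrr.
  by rewrite hv ?subr0 //; lia.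
have -> : u * v = cmp hg u n * cmp hg v m + (cmp hg u n * (v - cmp hg v m) + (u - cmp hg u n) * v).
  by rewrite mulrBr mulrBl addrA [cmp hg u n * cmp hg v m + _]addrC subrK addrC subrK.
rewrite compD (comp_hom hg (degM hg (comp_deg hg u n) (comp_deg hg v m))) eqxx compD.
rewrite (Hi_mul (deg_Hi hg (comp_deg hg u n)) h2) ?(Hi_mul h1 hv) ?addr0 //; lia.
Qed.

Section Main.
Variables (k : fieldType) (A B : algType k) (degA : nat -> A -> Prop) (degB : nat -> B -> Prop).
Hypotheses (hA : is_grading degA) (hB : is_grading degB).
Hypotheses (genA : forall a : A, gen_by (degA 1%N) a) (genB : forall b : B, gen_by (degB 1%N) b).
Hypotheses (connA : forall a : A, degA 0%N a <-> exists c : k, a = c%:A)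
  (connB : forall b : B, degB 0%N b <-> exists c : k, b = c%:A).
Variables (gA : seq A).
Hypotheses (hgA1 : forall x, x \in gA -> degA 1%N x)
  (hgAsp : forall a, degA 1%N a -> exists c : 'I_(size gA) -> k, a = \sum_(i < size gA) c i *: gA`_i).
Variables (f : A -> B) (psi : B -> A).
Hypotheses (fL : forall (c : k) x y, f (c *: x + y) = c *: f x + f y)
  (fM : forall x y, f (x * y) = f x * f y) (f1 : f 1 = 1).
Hypotheses (fK : cancel f psi) (psiK : cancel psi f).

Lemma hA1 : degA 0%N 1. Proof. by apply/connA; exists 1; rewrite scale1r. Qed.
Lemma hB1 : degB 0%N 1. Proof. by apply/connB; exists 1; rewrite scale1r. Qed.

Lemma psiL c x y : psi (c *: x + y) = c *: psi x + psi y.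
Proof. by apply: (can_inj fK); rewrite fL !psiK. Qed.
Lemma psiM x y : psi (x * y) = psi x * psi y.
Proof. by apply: (can_inj fK); rewrite fM !psiK. Qed.
Lemma psi1 : psi 1 = 1.
Proof. by rewrite -f1 fK. Qed.

Definition MA n a := Hi hB n (f a).

Lemma factEA n a : exists l h, a = l + h /\ Lo hA n l /\ MA n h.
Proof. exact (factE hA hB genA connB fL fM f1 hB1 hA1 n a). Qed.
Lemma factEB n b : exists l h, b = l + h /\ Lo hB n l /\ Hi hA n (psi h).
Proof. exact: (factE hB hA genB connA psiL psiM psi1 hA1 hB1). Qed.

Lemma Lopart0' (C : algType k) dg (hg : is_grading (A:=C) dg) n : Lopart hg n 0 = 0.
Proof. by rewrite /Lopart big1 // => i _; rewrite comp0. Qed.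
Lemma LopartD (C : algType k) dg (hg : is_grading (A:=C) dg) n x y :
  Lopart hg n (x + y) = Lopart hg n x + Lopart hg n y.
Proof. by have := LopartL hg n 1 x y; rewrite !scale1r. Qed.
Lemma LopartN (C : algType k) dg (hg : is_grading (A:=C) dg) n x :
  Lopart hg n (- x) = - Lopart hg n x.
Proof. by have := LopartL hg n (-1) x 0; rewrite !addr0 !scaleN1r Lopart0' addr0. Qed.
Lemma LopartB (C : algType k) dg (hg : is_grading (A:=C) dg) n x y :
  Lopart hg n (x - y) = Lopart hg n x - Lopart hg n y.
Proof. by rewrite LopartD LopartN. Qed.

Lemma psi0 : psi 0 = 0. Proof. exact: (f0 psiL). Qed.
Lemma psiD x y : psi (x + y) = psi x + psi y. Proof. exact: (fD psiL). Qed.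
Lemma psiB x y : psi (x - y) = psi x - psi y. Proof. exact: (fB psiL). Qed.
Lemma f0' : f 0 = 0. Proof. exact: (f0 fL). Qed.
Lemma fD' x y : f (x + y) = f x + f y. Proof. exact: (fD fL). Qed.
Lemma fB' x y : f (x - y) = f x - f y. Proof. exact: (fB fL). Qed.

Lemma factH n a : Lo hA n a -> MA n a -> a = 0.
Proof.
move=> la ma.
pose gg := fun a => Lopart hA n (psi (Lopart hB n (f a))).
have hP := Lo_span hA genA hA1 hgA1 hgAsp n.
apply: (surj_inj hP (g := gg)) => //.
- by move=> c x y; rewrite /gg fL LopartL psiL LopartL.
- by move=> v _; apply: Lopart_Lo.
- move=> v hv.
  case: (factEB n (f v)) => l [h [ev [ll hh]]].
  case: (factEA n (psi l)) => l' [h' [el [ll' hh']]].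
  exists l'; split=> //; rewrite /gg.
  have e1 : f l' = l - f h' by rewrite -[l]psiK el fD' addrK.
  have -> : Lopart hB n (f l') = l by rewrite e1 LopartB (Lopart_id ll) (Hi_Lopart0 hh') subr0.
  have e2 : psi l = v - psi h by rewrite -[v]fK ev psiD addrK.
  by rewrite e2 LopartB (Lopart_id hv) (Hi_Lopart0 hh) subr0.
- by rewrite /gg (Hi_Lopart0 ma) psi0 Lopart0'.
Qed.

Lemma hpart_ex n x : exists h, Lo hA n (x - h) /\ MA n h.
Proof. by case: (factEA n x) => l [h [-> [ll hh]]]; exists h; rewrite addrK. Qed.
Definition hpart n x := proj1_sig (constructive_indefinite_description _ (hpart_ex n x)).
Lemma hpartP n x : Lo hA n (x - hpart n x) /\ MA n (hpart n x).
Proof. by rewrite /hpart; case: constructive_indefinite_description. Qed.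
Lemma hpart_uniq n x h : Lo hA n (x - h) -> MA n h -> hpart n x = h.
Proof.
move=> l1 m1; case: (hpartP n x) => l2 m2; apply/eqP; rewrite -subr_eq0; apply/eqP.
apply: (factH (n := n)).
- by have := LoB l1 l2; rewrite opprB addrC addrA subrK addrC.
- by rewrite /MA fB'; apply: HiB.
Qed.
Lemma hpartL n c x y : hpart n (c *: x + y) = c *: hpart n x + hpart n y.
Proof.
case: (hpartP n x) => l1 m1; case: (hpartP n y) => l2 m2; apply: hpart_uniq.
- have := LoL c l1 l2; rewrite scalerBr.
  by rewrite opprD addrACA addrA.
- by rewrite /MA fL; apply: HiL.
Qed.
Lemma hpart0 n : hpart n 0 = 0.
Proof. by apply: hpart_uniq; rewrite ?subr0 /MA ?f0'; [apply: Lo0|apply: Hi0]. Qed.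

Definition Gh j x := cmp hB (f (hpart j x)) j.
Lemma GhL j c x y : Gh j (c *: x + y) = c *: Gh j x + Gh j y.
Proof. by rewrite /Gh hpartL fL compL. Qed.
Lemma Gh0 j : Gh j 0 = 0.
Proof. by rewrite /Gh hpart0 f0' comp0. Qed.
Definition Gc a j := Gh j (cmp hA a j).
Lemma GcL c a b j : Gc (c *: a + b) j = c *: Gc a j + Gc b j.
Proof. by rewrite /Gc compL GhL. Qed.
Lemma Gc0 a j : cmp hA a j = 0 -> Gc a j = 0.
Proof. by rewrite /Gc => ->; apply: Gh0. Qed.

Definition Nb a := proj1_sig (constructive_indefinite_description _ (comp_bound hA a)).
Lemma NbP a j : (Nb a <= j)%N -> cmp hA a j = 0.
Proof. by rewrite /Nb; case: constructive_indefinite_description => N /= h; apply: h. Qed.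
Definition G a := \sum_(j < Nb a) Gc a j.

Lemma G_eq a K : (forall j, (K <= j)%N -> cmp hA a j = 0) -> G a = \sum_(j < K) Gc a j.
Proof.
move=> hK; rewrite /G.
rewrite -(@sum_ext0 _ (Gc a) (Nb a) (maxn (Nb a) K)) ?leq_maxl //; last by move=> j /NbP /Gc0.
by rewrite (@sum_ext0 _ (Gc a) K (maxn (Nb a) K)) ?leq_maxr // => j /hK /Gc0.
Qed.

Lemma GL c a b : G (c *: a + b) = c *: G a + G b.
Proof.
pose K := maxn (Nb a) (Nb b).
have ha : forall j, (K <= j)%N -> cmp hA a j = 0 by move=> j hj; apply: NbP; apply: leq_trans hj; apply: leq_maxl.
have hb : forall j, (K <= j)%N -> cmp hA b j = 0 by move=> j hj; apply: NbP; apply: leq_trans hj; apply: leq_maxr.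
rewrite (G_eq ha) (G_eq hb) (@G_eq _ K); last by move=> j hj; rewrite compL ha ?hb ?scaler0 ?addr0.
by rewrite scaler_sumr -big_split; apply: eq_bigr => j _; rewrite GcL.
Qed.
Lemma G0 : G 0 = 0.
Proof. by rewrite (@G_eq _ 0) ?big_ord0 // => j _; rewrite comp0. Qed.
Lemma GD a b : G (a + b) = G a + G b.
Proof. by have := GL 1 a b; rewrite !scale1r. Qed.
Lemma GB a b : G (a - b) = G a - G b.
Proof. by have := GL (-1) b a; rewrite !scaleN1r addrC => ->; rewrite addrC. Qed.
Lemma G_sum n (F : 'I_n -> A) : G (\sum_i F i) = \sum_i G (F i).
Proof. by elim/big_rec2: _ => [|j x y _ <-]; rewrite ?G0 ?GD. Qed.

Lemma G_hom i x : degA i x -> G x = Gh i x.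
Proof.
move=> hx; rewrite (@G_eq _ i.+1); last by move=> j hj; rewrite (comp_hom hA hx); case: eqP => // e; rewrite e ltnn in hj.
rewrite big_ord_recr /= big1 ?add0r; last first.
  move=> j _; apply: Gc0; rewrite (comp_hom hA hx); case: eqP => // e.
  by move: (ltn_ord j); rewrite e ltnn.
by rewrite /Gc (comp_hom hA hx) eqxx.
Qed.

Lemma cmpG a j : cmp hB (G a) j = Gc a j.
Proof.
apply: (@compP _ _ _ hB (G a) (Gc a) (Nb a)); split.
- by move=> i; apply: comp_deg.
- by move=> i /NbP /Gc0.
- by [].
Qed.

Lemma Gh_inj j x : degA j x -> Gh j x = 0 -> x = 0.
Proof.
move=> hx h0; case: (hpartP j x) => l m.
have m' : MA j.+1 (hpart j x).
  move=> i; rewrite ltnS leq_eqVlt => /orP[/eqP ->|hi]; [exact: h0|exact: m].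
have l' : Lo hA j.+1 (hpart j x).
  have := LoB (deg_Lo hA hx) (Lo_mono (leqnSn j) l); by rewrite opprB addrC subrK.
have e := factH l' m'; rewrite e subr0 in l.
have e2 := comp_hom hA hx j; rewrite eqxx in e2; by rewrite -e2; apply: l.
Qed.

Lemma Gh_surj i y : degB i y -> exists x, degA i x /\ Gh i x = y.
Proof.
move=> hy; case: (factEA i.+1 (psi y)) => l [h' [ea [ll hh]]].
exists (cmp hA l i); split; first exact: comp_deg.
rewrite /Gh.
have -> : hpart i (cmp hA l i) = l.
  apply: hpart_uniq.
  - move=> j hj; rewrite compB (comp_hom hA (comp_deg hA l i)).
    case: eqP => [->|ne]; first by rewrite subrr.
    by rewrite ll ?subrr //; lia.
  - have e : f l = y - f h' by rewrite -[y]psiK ea fD' addrK.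
    rewrite /MA e; apply: HiB; first exact: deg_Hi hy.
    by apply: (Hi_mono (leqnSn i)).
have e : f l = y - f h' by rewrite -[y]psiK ea fD' addrK.
by rewrite e compB (comp_hom hB hy) eqxx hh ?subr0.
Qed.

Lemma G_inj a : G a = 0 -> a = 0.
Proof.
move=> h; apply: (comp_eq (hg := hA)) => j; rewrite comp0.
apply: (Gh_inj (comp_deg hA a j)).
by have := cmpG a j; rewrite h comp0 /Gc => <-.
Qed.

Lemma G_surj b : exists a, G a = b.
Proof.
case: (comp_bound hB b) => K hK.
have hx : forall j : 'I_K, exists x, degA j x /\ Gh j x = cmp hB b j.
  move=> j; apply: Gh_surj; exact: comp_deg.
pose x j := proj1_sig (constructive_indefinite_description _ (hx j)).
have xP : forall j : 'I_K, degA j (x j) /\ Gh j (x j) = cmp hB b j.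
  by move=> j; rewrite /x; case: constructive_indefinite_description.
exists (\sum_j x j); rewrite G_sum (comp_sumE hK); apply: eq_bigr => j _.
by case: (xP j) => d e; rewrite (G_hom d) e.
Qed.

Lemma G_deg i a : degA i a <-> degB i (G a).
Proof.
split.
- by move=> h; rewrite (G_hom h); apply: comp_deg.
- move=> h.
  have e : a = cmp hA a i.
    apply: (comp_eq (hg := hA)) => j; rewrite (comp_hom hA (comp_deg hA a i)).
    case: eqP => [->//|ne].
    apply: (Gh_inj (comp_deg hA a j)).
    by have := cmpG a j; rewrite (comp_hom hB h); case: eqP => // _ <-.
  by rewrite e; apply: comp_deg.
Qed.

Lemma Gh_mul i j x y : degA i x -> degA j y -> Gh (i + j) (x * y) = Gh i x * Gh j y.
Proof.
move=> hx hy; case: (hpartP i x) => l1 m1; case: (hpartP j y) => l2 m2.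
rewrite /Gh.
have -> : hpart (i + j) (x * y) = hpart i x * hpart j y.
  apply: hpart_uniq; last by rewrite /MA fM; apply: Hi_mul.
  have -> : x * y - hpart i x * hpart j y = (x - hpart i x) * y + hpart i x * (y - hpart j y).
    by rewrite mulrBl mulrBr addrA subrK.
  apply: LoD; first exact: (Lo_mul l1 (deg_Lo hA hy)).
  apply: Lo_mul' => //.
  have := LoB (deg_Lo hA hx) (Lo_mono (leqnSn i) l1); by rewrite opprB addrC subrK.
by rewrite /Gh fM (cmp_lead m1 m2).
Qed.

Lemma G_mul a b : G (a * b) = G a * G b.
Proof.
pose K := maxn (Nb a) (Nb b).
have ha : forall j, (K <= j)%N -> cmp hA a j = 0 by move=> j hj; apply: NbP; apply: leq_trans hj; apply: leq_maxl.
have hb : forall j, (K <= j)%N -> cmp hA b j = 0 by move=> j hj; apply: NbP; apply: leq_trans hj; apply: leq_maxr.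
rewrite (comp_sumE ha) (comp_sumE hb) mulr_suml !G_sum mulr_suml.
apply: eq_bigr => i _; rewrite mulr_sumr G_sum mulr_sumr; apply: eq_bigr => j _.
rewrite (G_hom (degM hA (comp_deg hA a i) (comp_deg hA b j))).
by rewrite Gh_mul ?(G_hom (comp_deg hA a i)) ?(G_hom (comp_deg hA b j)) //; apply: comp_deg.
Qed.

Lemma G1 : G 1 = 1.
Proof.
rewrite (G_hom hA1) /Gh.
have -> : hpart 0 1 = 1 by apply: hpart_uniq; [rewrite subrr; apply: Lo0| move=> j].
by rewrite f1 (comp_hom hB hB1).
Qed.

End Main.

Unset Implicit Arguments.
Theorem theorem1 (k : fieldType) (A B : algType k)
    (degA : nat -> A -> Prop) (degB : nat -> B -> Prop) :
  cgraded_fg1 degA -> cgraded_fg1 degB ->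
  (exists f : A -> B, alg_iso f) ->
  exists g : A -> B, graded_alg_iso degA degB g.
Proof.
case=> hgA connA [gA [hg1 hgsp]] genA [hgB connB _ genB] [f [fL fM f1 [psi fK psiK]]].
have L := GL hgA hgB genA genB connA connB hg1 hgsp fL fM f1 fK psiK.
have Mu := G_mul hgA hgB genA genB connA connB hg1 hgsp fL fM f1 fK psiK.
have U := G1 hgA hgB genA genB connA connB hg1 hgsp fL fM f1 fK psiK.
have Su := G_surj hgA hgB genA genB connA connB hg1 hgsp fL fM f1 fK psiK.
have In := @G_inj _ _ _ _ _ hgA hgB genA genB connA connB _ hg1 hgsp _ _ fL fM f1 fK psiK.
have Dg := G_deg hgA hgB genA genB connA connB hg1 hgsp fL fM f1 fK psiK.
set G0 := G hgA hgB genA connA connB fL fM f1 in L Mu U Su In Dg *.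
exists G0; split; last exact: Dg.
split=> //.
pose Gi b := proj1_sig (constructive_indefinite_description _ (Su b)).
have GiK : cancel Gi G0 by move=> b; rewrite /Gi; case: constructive_indefinite_description.
exists Gi => // a.
apply/eqP; rewrite -subr_eq0; apply/eqP; apply: In.
have h := L (-1) a (Gi (G0 a)).
by rewrite addrC -scaleN1r h GiK scaleN1r addNr.
Qed.
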